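(* Let $\mathbf S$ be a species and, for each $i\ge0$, let $a_i$ be the number of $\mathbf S$-structures on an $i$-element set. For integers $n,x\ge 0$ let $p_n(x)$ be the number of $\mathbf S$-enriched functions from an $n$-element set to an $x$-element set. Then, for all integers $n,x\ge0$, $$p_n(x)=\sum_{\lambda\vdash n}\binom{n}{\lambda}\,\frac{\prod_{i=1}^{\ell(\lambda)}a_{\lambda_i}}{\prod_{j\ge1}\mathrm{mult}_j(\lambda)!}\,(x)_{\ell(\lambda)}.$$
   Context: A species $\mathbf S$ is a functor from the category of finite sets and bijections to itself, with $|\mathbf S[\emptyset]|=1$ and $|\mathbf S[E]|\ge1$ whenever $|E|=1$. The number $a_i=|\mathbf S[E]|$ for $|E|=i$ depends only on $i$. An $\mathbf S$-enriched function from $N$ to $X$ is a pair $(f,(A_y)_{y\in X})$ where $f:N\to X$ and $A_y\in\mathbf S[f^{-1}(y)]$ for each $y\in X$. A partition $\lambda\vdash n$ is a nonincreasing, eventually zero sequence of nonnegative integers with sum $n$. Its length $\ell(\lambda)$ is its number of nonzero parts, and $\mathrm{mult}_j(\lambda)$ is the number of parts equal to $j$. We write $\binom{n}{\lambda}=n!/\prod_i\lambda_i!$ and $(x)_k=x(x-1)\cdots(x-k+1)$. *)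

(* Defs.v *)
From mathcomp Require Import all_boot all_algebra.
Set Implicit Arguments. Unset Strict Implicit. Unset Printing Implicit Defensive.
Import GRing.Theory Num.Theory.

(* A species: a functor from finite sets and bijections to finite sets,
   with |S[E]| = 1 for E empty and |S[E]| >= 1 for |E| = 1.
   Finite sets are modelled as finTypes, bijections as functions together
   with a proof of bijectivity. *)
Record species := Species {
  sp_obj :> finType -> finType;
  sp_map : forall (E F : finType) (f : E -> F), bijective f -> sp_obj E -> sp_obj F;
  sp_map_id : forall (E : finType) (h : bijective (@id E)) (s : sp_obj E),
      sp_map h s = s;
  sp_map_comp : forall (E F G : finType) (f : E -> F) (g : F -> G)
      (hf : bijective f) (hg : bijective g) (hgf : bijective (g \o f))
      (s : sp_obj E), sp_map hgf s = sp_map hg (sp_map hf s);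
  sp_empty : forall E : finType, #|E| = 0 -> #|sp_obj E| = 1;
  sp_single : forall E : finType, #|E| = 1 -> 0 < #|sp_obj E|
}.

Definition sp_count (S : species) (i : nat) : nat := #|S 'I_i|.

Definition fiber (N X : finType) (f : {ffun N -> X}) (y : X) : finType :=
  {i : N | f i == y}.

Definition enriched_fun (S : species) (N X : finType) : finType :=
  {f : {ffun N -> X} & {dffun forall y : X, S (fiber f y)}}.

Definition p_enr (S : species) (n x : nat) : nat :=
  #|enriched_fun S 'I_n 'I_x|.

(* A partition of n is represented by its first n parts
   lam 0 >= lam 1 >= ... >= lam (n-1) >= 0 (all further parts are 0,
   since a partition of n has at most n nonzero parts). *)
Definition is_partition (n : nat) (lam : {ffun 'I_n -> 'I_n.+1}) : bool :=
  [forall i : 'I_n, forall j : 'I_n, (i <= j)%N ==> (lam j <= lam i)%N]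
  && (\sum_(i < n) (lam i : nat) == n)%N.

Definition ell (n : nat) (lam : {ffun 'I_n -> 'I_n.+1}) : nat :=
  #|[set i | (lam i : nat) != 0%N]|.

Definition mult (n : nat) (lam : {ffun 'I_n -> 'I_n.+1}) (j : nat) : nat :=
  #|[set i | (lam i : nat) == j]|.

(* Main.v *)
Set Warnings "-notation-overridden,-ambiguous-paths".
Require Import Defs.
From mathcomp Require Import all_boot all_algebra.
From mathcomp Require Import ring zify.
From Stdlib Require Import FunctionalExtensionality.
Import GRing.Theory Num.Theory.
Set Implicit Arguments. Unset Strict Implicit. Unset Printing Implicit Defensive.

Lemma card_tuple_split (T : finType) N (P : pred (N.+1.-tuple T)) :
  #|[pred t | P t]| = \sum_(k : T) #|[pred t : N.-tuple T | P [tuple of k :: t]]|.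
Proof.
rewrite -sum1_card.
rewrite (reindex (fun p : T * N.-tuple T => [tuple of p.1 :: p.2])) /=; last first.
  exists (fun t : N.+1.-tuple T => (thead t, [tuple of behead t])).
    by move=> [k t] _; congr pair; apply: val_inj.
  by move=> t _; apply: val_inj => /=; rewrite [in RHS](tuple_eta t).
rewrite -(pair_big_dep predT (fun (k : T) (t : N.-tuple T) => P [tuple of k :: t]) (fun _ _ => 1)) /=.
by apply: eq_bigr => k _; rewrite sum1_card.
Qed.

Lemma count_tof (T : finType) N (w : {ffun 'I_N -> T}) k :
  count_mem k (tuple_of_finfun w) = #|[pred i | w i == k]|.
Proof.
rewrite /tuple_of_finfun /= count_map cardE /enum_mem size_filter.
by rewrite /= -enumT count_filter; apply: eq_count => i /=; rewrite inE andbT.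
Qed.

Lemma multinom_tuple (T : finType) N (m : T -> nat) :
  \sum_k m k = N ->
  #|[pred t : N.-tuple T | [forall k, count_mem k t == m k]]| * \prod_k (m k)`! = N`!.
Proof.
elim: N m => [|N IH] m Hm.
  have m0 : forall k, m k = 0.
    by move=> k; apply/eqP; move: Hm => /eqP; rewrite sum_nat_eq0 => /forallP /(_ k).
  rewrite big1 ?muln1; last by move=> k _; rewrite m0.
  rewrite fact0 -(expn0 #|T|) -(card_tuple 0 T); apply: eq_card => t.
  by rewrite tuple0 !inE; apply/forallP => k; rewrite m0.
rewrite card_tuple_split big_distrl /=.
rewrite (eq_bigr (fun k => m k * N`!)); last first.
  move=> k _; case Emk: (m k) => [|p].
    rewrite eq_card0 // => t; rewrite !inE; apply/negP => /forallP /(_ k).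
    by rewrite /= eqxx Emk.
  pose m' := fun k' => m k' - (k == k').
  have Hm' : \sum_k m' k = N.
    rewrite (bigD1 k) //= /m' eqxx Emk subn1 /=; move: Hm; rewrite (bigD1 k) //= Emk.
    rewrite (eq_bigr (fun i => m i - (k == i)) (P := fun i => i != k)) //.
      by rewrite addSn => [[]].
    by move=> i; rewrite eq_sym => /negbTE ->; rewrite subn0.
  rewrite (eq_card (B := [pred t : N.-tuple T | [forall k, count_mem k t == m' k]])).
    have mk' : m' k = p by rewrite /m' eqxx Emk subn1.
    have E : \prod_(i | i != k) (m' i)`! = \prod_(i | i != k) (m i)`!.
      by apply: eq_bigr => i; rewrite /m' eq_sym => /negbTE ->; rewrite subn0.
    rewrite -(IH m' Hm') (bigD1 k (F:= fun i => (m' i)`!)) //= (bigD1 k) //= E mk' Emk factS.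
    ring.
  move=> t; rewrite !inE; apply: eq_forallb => k' /=; rewrite /m'.
  case: (k =P k') => [<-|_]; first by rewrite Emk add1n eqSS subn1.
  by rewrite add0n subn0.
by rewrite -big_distrl /= Hm.
Qed.

Lemma multinom_ffun (T : finType) N (m : T -> nat) : \sum_k m k = N ->
  #|[pred w : {ffun 'I_N -> T} | [forall k, #|[pred i | w i == k]| == m k]]|
    * \prod_k (m k)`! = N`!.
Proof.
move=> Hm; rewrite -(multinom_tuple Hm); congr (_ * _).
rewrite -!sum1_card (reindex (@finfun_of_tuple T N)) /=; last first.
  by exists (@tuple_of_finfun T N) => t _; rewrite ?finfun_of_tupleK ?tuple_of_finfunK.
apply: eq_bigl => t; rewrite !inE; apply: eq_forallb => k.
by rewrite -count_tof finfun_of_tupleK.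
Qed.

Lemma sp_map_idf (S : species) (E : finType) (k : E -> E) (hk : bijective k) s :
  k = id -> @sp_map S E E k hk s = s.
Proof. by move=> Ek; subst k; apply: sp_map_id. Qed.

Lemma sp_card_le (S : species) (E F : finType) : #|E| = #|F| -> #|S E| <= #|S F|.
Proof.
move=> eq.
pose h : E -> F := fun e => enum_val (cast_ord eq (enum_rank e)).
pose g : F -> E := fun f => enum_val (cast_ord (esym eq) (enum_rank f)).
have hg : cancel h g by move=> e; rewrite /g /h enum_valK cast_ordK enum_rankK.
have gh : cancel g h by move=> f; rewrite /g /h enum_valK cast_ordKV enum_rankK.
have bh : bijective h by exists g.
have bg : bijective g by exists h.
have bgh : bijective (g \o h) by exists (g \o h) => e /=; rewrite !hg.
apply: (leq_card (@sp_map S E F h bh)) => s1 s2 E12.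
rewrite -(sp_map_idf bgh s1) -1?(sp_map_idf bgh s2); try by apply: functional_extensionality => e /=; rewrite hg.
by rewrite !(sp_map_comp bh bg bgh) E12.
Qed.

Lemma sp_card (S : species) (E : finType) : #|S E| = sp_count S #|E|.
Proof.
by rewrite /sp_count; apply/eqP; rewrite eqn_leq !sp_card_le // card_ord.
Qed.

Lemma p_enrE (S : species) n x :
  p_enr S n x = \sum_(f : {ffun 'I_n -> 'I_x}) \prod_(y : 'I_x) sp_count S #|[pred i | f i == y]|.
Proof.
rewrite /p_enr /enriched_fun card_tagged sumnE big_map big_enum /=.
apply: eq_bigr => f _; rewrite card_dep_ffun foldrE big_map big_enum /=.
by apply: eq_bigr => y _; rewrite sp_card /fiber card_sig.
Qed.

Definition Lseq n (lam : {ffun 'I_n -> 'I_n.+1}) : seq nat := [seq (lam i : nat) | i <- enum 'I_n].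
Definition nzs (s : seq nat) := [seq v <- s | v != 0].
Definition Parts n (lam : {ffun 'I_n -> 'I_n.+1}) := nzs (Lseq lam).

Lemma geq_trans' : transitive geq.
Proof. by move=> a b c h1 h2; apply: leq_trans h2 h1. Qed.
Lemma geq_total' : total geq.
Proof. by move=> a b; rewrite /= leq_total. Qed.
Lemma geq_anti' : antisymmetric geq.
Proof. by move=> a b /andP [h1 h2]; apply/eqP; rewrite eqn_leq; apply/andP; split. Qed.

Lemma nth_Lseq n (lam : {ffun 'I_n -> 'I_n.+1}) (i : 'I_n) : nth 0 (Lseq lam) i = lam i.
Proof. by rewrite /Lseq (nth_map i) ?size_enum_ord // nth_ord_enum. Qed.

Lemma size_Lseq n (lam : {ffun 'I_n -> 'I_n.+1}) : size (Lseq lam) = n.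
Proof. by rewrite size_map size_enum_ord. Qed.

Lemma sum_Lseq n (lam : {ffun 'I_n -> 'I_n.+1}) : \sum_(i < n) (lam i : nat) = sumn (Lseq lam).
Proof. by rewrite sumnE /Lseq big_map big_enum. Qed.

Lemma part_sorted n (lam : {ffun 'I_n -> 'I_n.+1}) : is_partition lam -> sorted geq (Lseq lam).
Proof.
case/andP => /forallP H _; rewrite sorted_pairwise; last exact: geq_trans'.
apply/(pairwiseP 0) => i j; rewrite !inE size_Lseq => ilt jlt ij.
have := H (Ordinal ilt) => /forallP /(_ (Ordinal jlt)) /implyP /= /(_ (ltnW ij)).
by rewrite -(nth_Lseq lam (Ordinal ilt)) -(nth_Lseq lam (Ordinal jlt)).
Qed.

Lemma part_sum n (lam : {ffun 'I_n -> 'I_n.+1}) : is_partition lam -> sumn (Lseq lam) = n.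
Proof. by case/andP => _ /eqP H; rewrite -sum_Lseq; apply: H. Qed.

Lemma all_geq0 s : all (geq 0) s -> s = nseq (size s) 0.
Proof.
elim: s => //= v s IH /andP [h1 h2]; rewrite -IH //; congr (_ :: _).
by apply/eqP; rewrite -leqn0.
Qed.

Lemma nth_nzs_sorted s i : sorted geq s -> nth 0 (nzs s) i = nth 0 s i.
Proof.
elim: s i => [|v s IH] i //= Hs.
have Hs' : sorted geq s := path_sorted Hs.
have [v0|vn0] := eqVneq v 0.
  subst v; have A : all (geq 0) s := order_path_min geq_trans' Hs.
  rewrite (all_geq0 A) /nzs filter_nseq /= nth_nil.
  by case: i => //= i; rewrite nth_nseq; case: ifP.
by case: i => //= i; apply: IH.
Qed.

Lemma nzs_all s : all (fun v => v != 0) (nzs s).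
Proof. exact: filter_all. Qed.

Lemma prod_nzs (g : nat -> nat) s : g 0 = 1 -> \prod_(v <- nzs s) g v = \prod_(v <- s) g v.
Proof.
move=> g0; rewrite big_filter big_mkcond; apply: eq_bigr => v _.
by case: ifP => // /negbFE /eqP ->; rewrite g0.
Qed.

Lemma size_le_sumn s : all (fun v => v != 0) s -> size s <= sumn s.
Proof.
elim: s => //= v s IH /andP [h1 h2]; rewrite -add1n leq_add //; first by rewrite lt0n.
exact: IH.
Qed.

Lemma Parts_sorted n (lam : {ffun 'I_n -> 'I_n.+1}) : is_partition lam -> sorted geq (Parts lam).
Proof. by move=> H; apply: sorted_filter; [exact: geq_trans' | exact: part_sorted]. Qed.

Lemma nth_Parts n (lam : {ffun 'I_n -> 'I_n.+1}) (i : 'I_n) : is_partition lam ->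
  nth 0 (Parts lam) i = lam i.
Proof. by move=> H; rewrite nth_nzs_sorted ?part_sorted // nth_Lseq. Qed.

Lemma sumn_Parts n (lam : {ffun 'I_n -> 'I_n.+1}) : is_partition lam -> sumn (Parts lam) = n.
Proof.
move=> H; rewrite -[RHS](part_sum H) /Parts /nzs !sumnE big_filter big_mkcond /=.
by apply: eq_bigr => v _; case: ifP => // /negbFE /eqP ->.
Qed.

Lemma ell_Parts n (lam : {ffun 'I_n -> 'I_n.+1}) : ell lam = size (Parts lam).
Proof.
rewrite /ell /Parts /nzs size_filter /Lseq count_map cardE /enum_mem size_filter /= -enumT.
by rewrite count_filter; apply: eq_count => i; rewrite !inE /= andbT.
Qed.

Lemma mult_Parts n (lam : {ffun 'I_n -> 'I_n.+1}) j : j != 0 ->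
  mult lam j = count_mem j (Parts lam).
Proof.
move=> jn0; rewrite /mult /Parts /nzs count_filter /Lseq count_map cardE /enum_mem size_filter /= -enumT.
rewrite count_filter; apply: eq_count => i; rewrite !inE /= andbT.
by case: eqP => // ->; rewrite jn0.
Qed.

Section Shape.
Variables n x : nat.
Implicit Types f : {ffun 'I_n -> 'I_x}.

Definition cnt f (y : 'I_x) := #|[pred i | f i == y]|.
Definition Cs f := [seq cnt f y | y <- enum 'I_x].
Definition Psh f := sort geq (nzs (Cs f)).
Definition shape f : {ffun 'I_n -> 'I_n.+1} := [ffun i : 'I_n => inord (nth 0 (Psh f) i)].

Lemma sum_cnt f : \sum_y cnt f y = n.
Proof.
rewrite /cnt (eq_bigr (fun y => \sum_i (f i == y))); last by move=> y _; rewrite -sum1_card big_mkcond /=; apply: eq_bigr => i _; rewrite !inE; case: eqP.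
rewrite exchange_big /= -[RHS]card_ord -sum1_card; apply: eq_bigr => i _.
by rewrite (bigD1 (f i)) //= eqxx big1 // => y /negbTE; rewrite eq_sym => ->.
Qed.

Lemma sumn_Cs f : sumn (Cs f) = n.
Proof. by rewrite sumnE /Cs big_map big_enum sum_cnt. Qed.

Lemma cnt_le f y : cnt f y <= n.
Proof. by rewrite /cnt; apply: leq_trans (max_card _) _; rewrite card_ord. Qed.

Lemma Psh_perm f : perm_eq (Psh f) (nzs (Cs f)).
Proof. by rewrite /Psh perm_sort. Qed.

Lemma Psh_sorted f : sorted geq (Psh f).
Proof. exact: (sort_sorted geq_total'). Qed.

Lemma Psh_pos f : all (fun v => v != 0) (Psh f).
Proof. by rewrite (perm_all _ (Psh_perm f)) nzs_all. Qed.

Lemma Psh_sum f : sumn (Psh f) = n.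
Proof.
rewrite (perm_sumn (Psh_perm f)) -[RHS](sumn_Cs f) /nzs !sumnE big_filter big_mkcond /=.
by apply: eq_bigr => v _; case: ifP => // /negbFE /eqP ->.
Qed.

Lemma Psh_size f : size (Psh f) <= n.
Proof. by rewrite -[X in _ <= X](Psh_sum f) size_le_sumn ?Psh_pos. Qed.

Lemma Psh_le f v : v \in Psh f -> v <= n.
Proof.
rewrite (perm_mem (Psh_perm f)) /nzs mem_filter => /andP [_ /mapP [y _ ->]].
exact: cnt_le.
Qed.

Lemma nth_Psh_le f i : nth 0 (Psh f) i <= n.
Proof.
case: (ltnP i (size (Psh f))) => h; first by apply: Psh_le; apply: mem_nth.
by rewrite nth_default.
Qed.

Lemma shapeE f (i : 'I_n) : shape f i = nth 0 (Psh f) i :> nat.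
Proof. by rewrite ffunE inordK // ltnS nth_Psh_le. Qed.

Lemma Lseq_shape f : Lseq (shape f) = Psh f ++ nseq (n - size (Psh f)) 0.
Proof.
apply: (@eq_from_nth _ 0).
  by rewrite size_Lseq size_cat size_nseq subnKC // Psh_size.
move=> i; rewrite size_Lseq => ilt.
rewrite (nth_Lseq (shape f) (Ordinal ilt)) shapeE /= nth_cat nth_nseq.
by case: ifP => // /negbT; rewrite -leqNgt => h; rewrite nth_default //; case: ifP.
Qed.

Lemma Parts_shape f : Parts (shape f) = Psh f.
Proof.
rewrite /Parts Lseq_shape /nzs filter_cat filter_nseq /= cats0.
by apply/all_filterP; apply: Psh_pos.
Qed.

Lemma shape_part f : is_partition (shape f).
Proof.
apply/andP; split.
  apply/forallP => i; apply/forallP => j; apply/implyP => ij.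
  rewrite !shapeE.
  case: (ltnP j (size (Psh f))) => hj; last by rewrite (nth_default 0 hj).
  have hi : i < size (Psh f) by apply: leq_ltn_trans ij hj.
  exact: (sorted_leq_nth geq_trans' (fun v => leqnn v) 0 (Psh_sorted f) i j hi hj ij).
by rewrite sum_Lseq Lseq_shape sumn_cat sumn_nseq mul0n addn0 Psh_sum.
Qed.

Lemma shape_uniq f (lam : {ffun 'I_n -> 'I_n.+1}) :
  is_partition lam -> perm_eq (nzs (Cs f)) (Parts lam) -> lam = shape f.
Proof.
move=> Hl Hp.
have E : Psh f = Parts lam.
  rewrite /Psh (perm_sortP geq_total' geq_trans' geq_anti' _ _ Hp).
  by rewrite sorted_sort ?Parts_sorted //; apply: geq_trans'.
apply/ffunP => i; apply: val_inj; rewrite /= shapeE E nth_Parts //.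
Qed.

Lemma shapeP f (lam : {ffun 'I_n -> 'I_n.+1}) :
  (is_partition lam && perm_eq (nzs (Cs f)) (Parts lam)) = (lam == shape f).
Proof.
apply/idP/eqP => [/andP [Hl Hp]|->]; first exact: shape_uniq.
by rewrite shape_part Parts_shape perm_sym Psh_perm.
Qed.

Lemma step2 (a : nat -> nat) : a 0 = 1 ->
  \sum_(f : {ffun 'I_n -> 'I_x}) \prod_y a (cnt f y) =
  \sum_(lam : {ffun 'I_n -> 'I_n.+1} | is_partition lam)
     #|[pred f : {ffun 'I_n -> 'I_x} | perm_eq (nzs (Cs f)) (Parts lam)]| *
     \prod_(v <- Parts lam) a v.
Proof.
move=> a0.
rewrite (eq_bigr (fun f => \sum_(lam : {ffun 'I_n -> 'I_n.+1} | is_partition lam && perm_eq (nzs (Cs f)) (Parts lam))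
   \prod_(v <- Parts lam) a v)); last first.
  move=> f _; rewrite (eq_bigl (pred1 (shape f))); last by move=> lam; rewrite shapeP.
  rewrite big_pred1_eq Parts_shape (perm_big _ (Psh_perm f)) prod_nzs //.
  by rewrite /Cs big_map big_enum.
rewrite (exchange_big_dep (@is_partition n)) /=; last by move=> f lam _ /andP [].
apply: eq_bigr => lam Hl.
rewrite (eq_bigr (fun _ => 1 * \prod_(v <- Parts lam) a v)); last by move=> *; rewrite mul1n.
rewrite -big_distrl /= sum1_card; congr (_ * _); apply: eq_card => f.
by rewrite !inE Hl.
Qed.

End Shape.

Lemma card_count (T : finType) (K : eqType) (c : T -> K) k :
  #|[pred y | c y == k]| = count_mem k [seq c y | y <- enum T].
Proof.
rewrite count_map cardE /enum_mem size_filter /= -enumT.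
by rewrite count_filter; apply: eq_count => i; rewrite !inE /= andbT.
Qed.

Lemma count_nzs s j : j != 0 -> count_mem j (nzs s) = count_mem j s.
Proof.
move=> jn0; rewrite /nzs count_filter; apply: eq_count => v /=.
by case: eqP => // ->; rewrite jn0.
Qed.

Lemma sum_count_mem n Q : all (fun v => (0 < v) && (v <= n)) Q ->
  \sum_(j < n) count_mem j.+1 Q = size Q.
Proof.
elim: Q => [|v Q IH] /=; first by rewrite big1.
case/andP => /andP [v0 vn] HQ; rewrite big_split /= IH // -add1n; congr (_ + _).
case: v v0 vn => // k _ kn.
rewrite (bigD1 (Ordinal kn)) //= eqxx big1 // => j Hj; rewrite eqSS.
case: eqP => // E; case/eqP: Hj; apply: val_inj; by rewrite /= E.
Qed.

Section Count.
Variables n x : nat.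
Variable Q : seq nat.
Hypothesis Qpos : all (fun v => v != 0) Q.
Hypothesis Qle : all (fun v => v <= n) Q.
Hypothesis Qsum : sumn Q = n.

Definition cv (c : {ffun 'I_x -> 'I_n.+1}) := [seq (c y : nat) | y <- enum 'I_x].
Definition Bc (c : {ffun 'I_x -> 'I_n.+1}) := perm_eq (nzs (cv c)) Q.
Definition Cf (f : {ffun 'I_n -> 'I_x}) : {ffun 'I_x -> 'I_n.+1} := [ffun y => inord (cnt f y)].

Lemma cv_Cf f : cv (Cf f) = Cs f.
Proof. by apply: eq_map => y; rewrite ffunE inordK // ltnS cnt_le. Qed.

Lemma N_decomp :
  #|[pred f : {ffun 'I_n -> 'I_x} | perm_eq (nzs (Cs f)) Q]| =
  \sum_(c | Bc c) #|[pred f : {ffun 'I_n -> 'I_x} | [forall y, cnt f y == c y]]|.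
Proof.
rewrite -sum1_card big_mkcond /=.
rewrite (eq_bigr (fun f => \sum_(c | Bc c && (c == Cf f)) 1)); last first.
  move=> f _; rewrite inE; case Hf: (perm_eq _ _).
    rewrite (eq_bigl (pred1 (Cf f))) ?big_pred1_eq //.
    by move=> c /=; case: (c =P Cf f) => [->|_]; rewrite ?andbF // /Bc cv_Cf Hf.
  rewrite big_pred0 // => c; case: (c =P Cf f) => [->|_]; rewrite ?andbF //.
  by rewrite /Bc cv_Cf Hf.
rewrite (exchange_big_dep Bc) /=; last by move=> f c _ /andP [].
apply: eq_bigr => c Bcc; rewrite -sum1_card; apply: eq_bigl => f.
rewrite !inE Bcc /=.
have -> : (c == Cf f) = [forall y, cnt f y == c y].
  apply/eqP/forallP => [->|H]; first by move=> y; rewrite ffunE inordK // ltnS cnt_le.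
  by apply/ffunP => y; apply: val_inj; rewrite ffunE /= -(eqP (H y)) inordK // ltnS cnt_le.
by [].
Qed.

Lemma sumn_nzs s : sumn (nzs s) = sumn s.
Proof.
rewrite /nzs !sumnE big_filter big_mkcond /=.
by apply: eq_bigr => v _; case: ifP => // /negbFE /eqP ->.
Qed.

Lemma per_c c : Bc c ->
  #|[pred f : {ffun 'I_n -> 'I_x} | [forall y, cnt f y == c y]]| * \prod_(v <- Q) v`! = n`!.
Proof.
move=> Bcc.
have Hs : \sum_y (c y : nat) = n.
  by rewrite -[RHS]Qsum -(perm_sumn Bcc) sumn_nzs sumnE /cv big_map big_enum.
have -> : \prod_(v <- Q) v`! = \prod_y (c y)`!.
  by rewrite -(perm_big _ Bcc) prod_nzs // /cv big_map big_enum.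
exact: (multinom_ffun (m := fun y => (c y : nat)) Hs).
Qed.

Lemma NQ : #|[pred f : {ffun 'I_n -> 'I_x} | perm_eq (nzs (Cs f)) Q]| * \prod_(v <- Q) v`!
  = #|[pred c | Bc c]| * n`!.
Proof.
rewrite N_decomp big_distrl /= (eq_bigr (fun _ => 1 * n`!)); last first.
  by move=> c Bcc; rewrite mul1n per_c.
by rewrite -big_distrl /= sum1_card.
Qed.

Lemma card_cv (c : {ffun 'I_x -> 'I_n.+1}) (j : 'I_n.+1) :
  #|[pred y | c y == j]| = count_mem (j : nat) (cv c).
Proof.
rewrite /cv count_map cardE /enum_mem size_filter /= -enumT.
by rewrite count_filter; apply: eq_count => i; rewrite !inE /= andbT.
Qed.

Lemma Qrange : all (fun v => (0 < v) && (v <= n)) Q.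
Proof. by apply/allP => v vQ; rewrite lt0n (allP Qpos v vQ) (allP Qle v vQ). Qed.

Lemma M_count : size Q <= x ->
  #|[pred c | Bc c]| * ((x - size Q)`! * \prod_(j < n) (count_mem j.+1 Q)`!) = x`!.
Proof.
move=> hl.
pose m (j : 'I_n.+1) := if (j : nat) == 0 then x - size Q else count_mem (j : nat) Q.
have Hsum : \sum_j m j = x.
  rewrite big_ord_recl /m /= (eq_bigr (fun i : 'I_n => count_mem i.+1 Q)); last first.
    by move=> i _; rewrite /bump leq0n add1n.
  by rewrite sum_count_mem ?Qrange // subnK.
have Hprod : \prod_j (m j)`! = (x - size Q)`! * \prod_(j < n) (count_mem j.+1 Q)`!.
  rewrite big_ord_recl /m /=; congr (_ * _); apply: eq_bigr => i _; by rewrite /bump leq0n add1n.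
rewrite -Hprod -(multinom_ffun Hsum); congr (_ * _); apply: eq_card => c; rewrite !inE.
apply/idP/forallP => [Bcc j|H].
  rewrite card_cv /m; have [j0|jn0] := eqVneq (j : nat) 0.
    rewrite j0; have := count_predC (pred1 0) (cv c).
    have := perm_size Bcc; rewrite /nzs size_filter size_map size_enum_ord.
    have -> : count (predC (pred1 0)) (cv c) = count (fun v => v != 0) (cv c) by [].
    by move=> <- <-; rewrite addnK.
  by rewrite -count_nzs // (permP Bcc).
rewrite /Bc /perm_eq; apply/allP => v _; rewrite inE; apply/eqP.
have [->|v0] := eqVneq v 0.
  have -> : count_mem 0 (nzs (cv c)) = 0 by apply/count_memPn; rewrite mem_filter eqxx.
  by apply/esym/count_memPn; apply/negP => /(allP Qpos); rewrite eqxx.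
case: (leqP v n) => vn; last first.
  have -> : count_mem v (nzs (cv c)) = 0.
    apply/count_memPn; rewrite mem_filter; apply/negP => /andP [_ /mapP [y _ E]].
    by move: vn; rewrite E ltnNge -ltnS ltn_ord.
  by apply/esym/count_memPn; apply/negP => /(allP Qle); rewrite leqNgt vn.
rewrite count_nzs //; have := H (Ordinal (vn : v < n.+1)).
by rewrite card_cv /m /= (negbTE v0) => /eqP.
Qed.

Lemma count_final :
  #|[pred f : {ffun 'I_n -> 'I_x} | perm_eq (nzs (Cs f)) Q]| * \prod_(v <- Q) v`!
    * \prod_(j < n) (count_mem j.+1 Q)`! = n`! * x ^_ (size Q).
Proof.
rewrite NQ; case: (leqP (size Q) x) => hl.
  have H1 := M_count hl; rewrite -(ffact_fact hl) in H1.
  have H2 : #|[pred c | Bc c]| * \prod_(j < n) (count_mem j.+1 Q)`! = x ^_ (size Q).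
    apply/eqP; rewrite -(eqn_pmul2r (fact_gt0 (x - size Q))); apply/eqP; rewrite -H1.
    ring.
  rewrite -H2; ring.
have -> : #|[pred c | Bc c]| = 0.
  apply: eq_card0 => c; rewrite inE; apply/negP => Bcc.
  move: hl; rewrite -(perm_size Bcc) /nzs size_filter ltnNge.
  by rewrite (leq_trans (count_size _ _)) // size_map size_enum_ord.
by rewrite ffact_small // muln0 !mul0n.
Qed.
End Count.


Unset Implicit Arguments.
Local Open Scope ring_scope.

Theorem mainTheorem2 (S : species) (n x : nat) :
  (p_enr S n x)%:R =
  \sum_(lam : {ffun 'I_n -> 'I_n.+1} | is_partition lam)
     ((n`!)%:R / (\prod_(i < n) ((lam i : nat)`!)%:R)) *
     ((\prod_(i < n | (i < ell lam)%N) sp_count S (lam i))%:R /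
        (\prod_(1 <= j < n.+1) ((mult lam j)`!)%:R)) *
     (x ^_ (ell lam))%:R :> rat.
Proof.
have a0 : sp_count S 0 = 1%N by rewrite /sp_count sp_empty // card_ord.
rewrite p_enrE (step2 _ _ a0) natr_sum; apply: eq_bigr => lam Hl.
set Q := Parts lam.
have Qpos : all (fun v => v != 0%N) Q by apply: nzs_all.
have Qle : all (fun v => (v <= n)%N) Q.
  apply/allP => v; rewrite /Q /Parts /nzs mem_filter => /andP [_ /mapP [i _ ->]].
  by rewrite -ltnS ltn_ord.
have Qsum : sumn Q = n by apply: sumn_Parts.
have Hnat := @count_final n x Q Qpos Qle Qsum.
have EL : (\prod_(i < n) (lam i : nat)`! = \prod_(v <- Q) v`!)%N.
  by rewrite prod_nzs // /Lseq big_map big_enum.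
have EA : (\prod_(i < n | (i < ell lam)%N) sp_count S (lam i) = \prod_(v <- Q) sp_count S v)%N.
  rewrite prod_nzs // /Lseq big_map big_enum /= big_mkcond /=; apply: eq_bigr => i _.
  case: ifP => //; rewrite ell_Parts -/Q ltnNge => /negbFE hi.
  by rewrite -(nth_Parts i Hl) -/Q nth_default.
have EM : (\prod_(1 <= j < n.+1) (mult lam j)`! = \prod_(j < n) (count_mem j.+1 Q)`!)%N.
  rewrite big_add1 /= big_mkord; apply: eq_bigr => j _; by rewrite mult_Parts.
rewrite -!natr_prod EL EA EM ell_Parts -/Q.
set N := #|_|.
set L := (\prod_(v <- Q) v`!)%N.
set Mu := (\prod_(j < n) (count_mem j.+1 Q)`!)%N.
set PA := (\prod_(v <- Q) sp_count S v)%N.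
set X := (x ^_ size Q)%N.
have L0 : (L%:R : rat) != 0 by rewrite pnatr_eq0 -lt0n /L prodn_gt0 // => v; rewrite fact_gt0.
have M0 : (Mu%:R : rat) != 0 by rewrite pnatr_eq0 -lt0n /Mu prodn_gt0 // => v; rewrite fact_gt0.
have H : (N%:R * L%:R * Mu%:R : rat) = n`!%:R * X%:R by rewrite -!natrM Hnat.
rewrite natrM.
rewrite (_ : _ * _ * _ = (n`!%:R * X%:R) * PA%:R / (L%:R * Mu%:R)); last by field; rewrite L0 M0.
rewrite -H; field; by rewrite L0 M0.
Qed.
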